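(* Let $\mathbf C$ be a category of coframes. The forgetful functor $|\_|:\mathbf C^{\mathrm{adh}}\to\mathbf C$ is topological: every sink $(\varphi_i:|L_i|\to L)_{i\in I}$ of $\mathbf C$-morphisms, with each $L_i$ an adherence $\mathbf C$-object, has a unique final lift, namely $(L,\nu_L)$ where $$\nu_L(\ell)=\bigwedge_{\substack{n\in\mathbb N,\ a_1,\dots,a_n\in\mathcal C_L\\ \ell\le\bigvee_{j=1}^n a_j}}\ \bigvee_{j=1}^n\ \bigwedge_{i\in I}\varphi_i\big(\nu_{L_i}(\varphi_{i!}(a_j))\big).$$
   Context: A category of coframes has coframes as objects and coframe morphisms (preserving arbitrary infima and finite suprema); each coframe morphism $\varphi$ has a left adjoint $\varphi_!$. $\mathcal C_L$ is the set of complemented elements of $L$. An adherence structure on $L$ is a monotone $\nu:L\to L$ preserving finite suprema of complemented elements with $\nu(\ell)=\bigwedge\{\nu(a):a\in\mathcal C_L,a\ge\ell\}$. An adherence $\mathbf C$-object is $(L,\nu_L)$ with $\nu_L$ an adherence structure; $\mathbf C^{\mathrm{adh}}$ has as morphisms the $\mathbf C$-morphisms $\varphi:L\to L'$ that are continuous: $\nu_{L'}(\ell')\le\varphi(\nu_L(\varphi_!(\ell')))$ for all $\ell'\in L'$. $|\_|$ sends $(L,\nu_L)$ to $L$. A lift of the sink is an adherence structure on $L$ making every $\varphi_i$ continuous; it is final if for every $\mathbf C$-morphism $\psi:L\to|L'|$ with $L'$ an adherence $\mathbf C$-object, $\psi$ is continuous iff every $\psi\circ\varphi_i$ is continuous.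 *)

(* Defs.v *)
From Stdlib Require Import List.
Import ListNotations.

(* A coframe: a complete lattice (arbitrary infima and suprema of Prop-valued
   subsets) in which binary joins distribute over arbitrary meets:
   a \/ /\S = /\ { a \/ s | s in S }. *)
Record coframe := Coframe {
  carrier :> Type;
  cle : carrier -> carrier -> Prop;
  cle_refl : forall x, cle x x;
  cle_trans : forall x y z, cle x y -> cle y z -> cle x z;
  cle_antisym : forall x y, cle x y -> cle y x -> x = y;
  cinf : (carrier -> Prop) -> carrier;
  csup : (carrier -> Prop) -> carrier;
  cinf_lb : forall (S : carrier -> Prop) x, S x -> cle (cinf S) x;
  cinf_glb : forall (S : carrier -> Prop) y, (forall x, S x -> cle y x) -> cle y (cinf S);
  csup_ub : forall (S : carrier -> Prop) x, S x -> cle x (csup S);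
  csup_lub : forall (S : carrier -> Prop) y, (forall x, S x -> cle x y) -> cle (csup S) y;
  codistr : forall (a : carrier) (S : carrier -> Prop),
    csup (fun x => x = a \/ x = cinf S)
    = cinf (fun y => exists s, S s /\ y = csup (fun x => x = a \/ x = s))
}.
Arguments cle {c}.
Arguments cinf {c}.
Arguments csup {c}.

Definition cbot {L : coframe} : L := csup (fun _ => False).
Definition ctop {L : coframe} : L := cinf (fun _ => False).
Definition cjoin {L : coframe} (a b : L) : L := csup (fun x => x = a \/ x = b).
Definition cmeet {L : coframe} (a b : L) : L := cinf (fun x => x = a \/ x = b).
Definition cjoinl {L : coframe} (s : list L) : L := fold_right cjoin cbot s.

Definition cimg {A B : Type} (f : A -> B) (S : A -> Prop) : B -> Prop :=
  fun y => exists x, S x /\ y = f x.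

Definition coframe_morphism {L L' : coframe} (f : L -> L') : Prop :=
  (forall S : L -> Prop, f (cinf S) = cinf (cimg f S)) /\
  f cbot = cbot /\
  (forall a b : L, f (cjoin a b) = cjoin (f a) (f b)).

(* The left adjoint phi_! of an infima-preserving map phi. *)
Definition ladj {L L' : coframe} (f : L -> L') (l' : L') : L :=
  cinf (fun l => cle l' (f l)).

Definition complemented {L : coframe} (a : L) : Prop :=
  exists b : L, cmeet a b = cbot /\ cjoin a b = ctop.

Definition adherence {L : coframe} (nu : L -> L) : Prop :=
  (forall x y : L, cle x y -> cle (nu x) (nu y)) /\
  (forall s : list L, Forall complemented s -> nu (cjoinl s) = cjoinl (map nu s)) /\
  (forall l : L, nu l = cinf (fun y => exists a, complemented a /\ cle l a /\ y = nu a)).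

Definition continuous {L L' : coframe} (nuL : L -> L) (nuL' : L' -> L') (f : L -> L') : Prop :=
  forall l' : L', cle (nuL' l') (f (nuL (ladj f l'))).

Record coframe_category := CoframeCategory {
  cobj : coframe -> Prop;
  chom : forall L L' : coframe, (L -> L') -> Prop;
  chom_morph : forall (L L' : coframe) (f : L -> L'),
    cobj L -> cobj L' -> chom L L' f -> coframe_morphism f;
  chom_id : forall L : coframe, cobj L -> chom L L (fun x => x);
  chom_comp : forall (L1 L2 L3 : coframe) (f : L1 -> L2) (g : L2 -> L3),
    cobj L1 -> cobj L2 -> cobj L3 -> chom L1 L2 f -> chom L2 L3 g ->
    chom L1 L3 (fun x => g (f x))
}.

Definition final_lift (C : coframe_category) {I : Type} (Li : I -> coframe)
  (nui : forall i, Li i -> Li i) (L : coframe) (phi : forall i, Li i -> L)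
  (nu : L -> L) : Prop :=
  adherence nu /\
  (forall i, continuous (nui i) nu (phi i)) /\
  (forall (L' : coframe) (nu' : L' -> L') (psi : L -> L'),
     cobj C L' -> adherence nu' -> chom C L L' psi ->
     (continuous nu nu' psi <-> forall i, continuous (nui i) nu' (fun x => psi (phi i x)))).

Definition final_adherence {I : Type} (Li : I -> coframe)
  (nui : forall i, Li i -> Li i) (L : coframe) (phi : forall i, Li i -> L)
  (l : L) : L :=
  let g (a : L) : L := cinf (fun y => exists i, y = phi i (nui i (ladj (phi i) a))) in
  cinf (fun y => exists s : list L,
          Forall complemented s /\ cle l (cjoinl s) /\ y = cjoinl (map g s)).

(* Main.v *)
Require Import Defs.
From Stdlib Require Import List FunctionalExtensionality.
Import ListNotations.

Lemma le_refl {L : coframe} (x : L) : cle x x.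
Proof. exact (cle_refl L x). Qed.
Lemma le_trans {L : coframe} (x y z : L) : cle x y -> cle y z -> cle x z.
Proof. exact (cle_trans L x y z). Qed.
Lemma join_l {L : coframe} (a b : L) : cle a (cjoin a b).
Proof. unfold cjoin; apply csup_ub; left; reflexivity. Qed.
Lemma join_r {L : coframe} (a b : L) : cle b (cjoin a b).
Proof. unfold cjoin; apply csup_ub; right; reflexivity. Qed.
Lemma join_lub {L : coframe} (a b c : L) : cle a c -> cle b c -> cle (cjoin a b) c.
Proof. intros H1 H2; unfold cjoin; apply csup_lub; intros x [-> | ->]; auto. Qed.
Lemma meet_l {L : coframe} (a b : L) : cle (cmeet a b) a.
Proof. unfold cmeet; apply cinf_lb; left; reflexivity. Qed.
Lemma meet_r {L : coframe} (a b : L) : cle (cmeet a b) b.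
Proof. unfold cmeet; apply cinf_lb; right; reflexivity. Qed.
Lemma meet_glb {L : coframe} (a b c : L) : cle c a -> cle c b -> cle c (cmeet a b).
Proof. intros H1 H2; unfold cmeet; apply cinf_glb; intros x [-> | ->]; auto. Qed.
Lemma bot_le {L : coframe} (x : L) : cle cbot x.
Proof. unfold cbot; apply csup_lub; intros _ []. Qed.
Lemma le_top {L : coframe} (x : L) : cle x ctop.
Proof. unfold ctop; apply cinf_glb; intros _ []. Qed.
Lemma join_comm_le {L : coframe} (a b : L) : cle (cjoin a b) (cjoin b a).
Proof. apply join_lub; [apply join_r | apply join_l]. Qed.
Lemma join_mono {L : coframe} (a a' b b' : L) :
  cle a a' -> cle b b' -> cle (cjoin a b) (cjoin a' b').
Proof.
  intros H1 H2; apply join_lub.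
  - eapply le_trans; [exact H1 | apply join_l].
  - eapply le_trans; [exact H2 | apply join_r].
Qed.

Lemma join_inf_ge {L : coframe} (z a : L) (S : L -> Prop) :
  (forall s, S s -> cle z (cjoin a s)) -> cle z (cjoin a (cinf S)).
Proof.
  intros H. unfold cjoin. rewrite codistr. apply cinf_glb.
  intros y [s [Hs ->]]. apply H; exact Hs.
Qed.

Lemma join_inf2_ge {L : coframe} (z : L) (S T : L -> Prop) :
  (forall s t, S s -> T t -> cle z (cjoin s t)) -> cle z (cjoin (cinf S) (cinf T)).
Proof.
  intros H. apply join_inf_ge. intros t Ht.
  eapply le_trans; [| apply join_comm_le]. apply join_inf_ge. intros s Hs.
  eapply le_trans; [apply H; eauto | apply join_comm_le].
Qed.

Lemma join_meet_ge {L : coframe} (x y z : L) :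
  cle (cmeet (cjoin x y) (cjoin x z)) (cjoin x (cmeet y z)).
Proof.
  change (cmeet y z) with (cinf (fun w => w = y \/ w = z)).
  apply join_inf_ge. intros s [-> | ->]; [apply meet_l | apply meet_r].
Qed.

Lemma meet_distr {L : coframe} (a b c : L) :
  cle (cmeet a (cjoin b c)) (cjoin (cmeet a b) (cmeet a c)).
Proof.
  eapply le_trans; [| apply join_meet_ge]. apply meet_glb.
  - eapply le_trans; [apply meet_l | apply join_r].
  - eapply le_trans; [| apply join_comm_le].
    eapply le_trans; [| apply join_meet_ge]. apply meet_glb.
    + eapply le_trans; [apply meet_l | apply join_r].
    + eapply le_trans; [apply meet_r | apply join_comm_le].
Qed.

Lemma compl_bot {L : coframe} : complemented (@cbot L).
Proof.
  exists ctop. split; apply cle_antisym.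
  - apply meet_l.
  - apply bot_le.
  - apply le_top.
  - apply join_r.
Qed.

Lemma compl_join {L : coframe} (a b : L) :
  complemented a -> complemented b -> complemented (cjoin a b).
Proof.
  intros [a' [Ha1 Ha2]] [b' [Hb1 Hb2]]. exists (cmeet a' b').
  split; apply cle_antisym; try apply bot_le; try apply le_top.
  - eapply le_trans. { apply meet_glb; [apply meet_r | apply meet_l]. }
    eapply le_trans; [apply meet_distr |]. apply join_lub.
    + rewrite <- Ha1. apply meet_glb; [apply meet_r |].
      eapply le_trans; [apply meet_l | apply meet_l].
    + rewrite <- Hb1. apply meet_glb; [apply meet_r |].
      eapply le_trans; [apply meet_l | apply meet_r].
  - eapply le_trans; [| apply join_meet_ge]. apply meet_glb.
    + rewrite <- Ha2. apply join_mono; [apply join_l | apply le_refl].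
    + rewrite <- Hb2. apply join_mono; [apply join_r | apply le_refl].
Qed.

Lemma compl_cjoinl {L : coframe} (s : list L) :
  Forall complemented s -> complemented (cjoinl s).
Proof.
  induction 1; simpl; [apply compl_bot | apply compl_join; auto].
Qed.

Lemma cjoinl_ub {L : coframe} (s : list L) x : In x s -> cle x (cjoinl s).
Proof.
  induction s as [|a s IH]; simpl; [intros [] |].
  intros [-> | H]; [apply join_l | eapply le_trans; [apply IH; exact H | apply join_r]].
Qed.

Lemma cjoinl_lub {L : coframe} (s : list L) c :
  (forall x, In x s -> cle x c) -> cle (cjoinl s) c.
Proof.
  induction s as [|a s IH]; simpl; intros H; [apply bot_le |].
  apply join_lub; [apply H; left; reflexivity | apply IH; intros; apply H; right; auto].
Qed.

Lemma cjoinl_map_mono {A : Type} {L : coframe} (F G : A -> L) (s : list A) :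
  (forall a, In a s -> cle (F a) (G a)) -> cle (cjoinl (map F s)) (cjoinl (map G s)).
Proof.
  intros H. apply cjoinl_lub. intros x Hx. apply in_map_iff in Hx.
  destruct Hx as [a [<- Ha]]. eapply le_trans; [apply H; exact Ha |].
  apply cjoinl_ub. apply in_map. exact Ha.
Qed.

Lemma cjoinl_app_le {L : coframe} (u v : list L) :
  cle (cjoinl (u ++ v)) (cjoin (cjoinl u) (cjoinl v)).
Proof.
  apply cjoinl_lub. intros x Hx. apply in_app_or in Hx. destruct Hx.
  - eapply le_trans; [apply cjoinl_ub; eauto | apply join_l].
  - eapply le_trans; [apply cjoinl_ub; eauto | apply join_r].
Qed.

Lemma cjoinl_app_ge {L : coframe} (u v : list L) :
  cle (cjoin (cjoinl u) (cjoinl v)) (cjoinl (u ++ v)).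
Proof.
  apply join_lub; apply cjoinl_lub; intros; apply cjoinl_ub; apply in_or_app; auto.
Qed.

Section Mor.
Lemma mor_glb {L L' : coframe} (f : L -> L') (H : coframe_morphism f)
  (S : L -> Prop) (y : L') :
  (forall x, S x -> cle y (f x)) -> cle y (f (cinf S)).
Proof.
  destruct H as [Hi _]. intros Hy. rewrite Hi. apply cinf_glb.
  intros z [x [Hx ->]]. auto.
Qed.
Lemma mor_lb {L L' : coframe} (f : L -> L') (H : coframe_morphism f)
  (S : L -> Prop) x : S x -> cle (f (cinf S)) (f x).
Proof.
  destruct H as [Hi _]. intros Hx. rewrite Hi. apply cinf_lb. exists x; auto.
Qed.
Lemma mor_mono {L L' : coframe} (f : L -> L') (H : coframe_morphism f) (x y : L) :
  cle x y -> cle (f x) (f y).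
Proof.
  intros Hxy. assert (E : x = cmeet x y).
  { apply cle_antisym; [apply meet_glb; [apply le_refl | exact Hxy] | apply meet_l]. }
  rewrite E. apply (mor_lb f H). right; reflexivity.
Qed.
Lemma mor_bot {L L' : coframe} (f : L -> L') (H : coframe_morphism f) : f cbot = cbot.
Proof. apply H. Qed.
Lemma mor_join {L L' : coframe} (f : L -> L') (H : coframe_morphism f) a b :
  f (cjoin a b) = cjoin (f a) (f b).
Proof. apply H. Qed.
Lemma mor_top {L L' : coframe} (f : L -> L') (H : coframe_morphism f) : f ctop = ctop.
Proof.
  apply cle_antisym; [apply le_top |].
  apply (mor_glb f H (fun _ => False)). intros x [].
Qed.
Lemma mor_compl {L L' : coframe} (f : L -> L') (H : coframe_morphism f) (a : L) :
  complemented a -> complemented (f a).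
Proof.
  intros [b [H1 H2]]. exists (f b). split; apply cle_antisym; try apply bot_le; try apply le_top.
  - assert (E : f (cmeet a b) = cbot) by (rewrite H1; apply (mor_bot f H)).
    rewrite <- E. apply (mor_glb f H). intros x [-> | ->]; [apply meet_l | apply meet_r].
  - rewrite <- (mor_join f H), H2, (mor_top f H). apply le_refl.
Qed.
Lemma mor_cjoinl {L L' : coframe} (f : L -> L') (H : coframe_morphism f) (s : list L) :
  f (cjoinl s) = cjoinl (map f s).
Proof.
  induction s as [|a s IH]; simpl; [apply (mor_bot f H) | rewrite (mor_join f H), IH; reflexivity].
Qed.

Lemma adj_unit {L L' : coframe} (f : L -> L') (H : coframe_morphism f) (x : L') :
  cle x (f (ladj f x)).
Proof. unfold ladj. apply (mor_glb f H). intros l Hl; exact Hl. Qed.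
Lemma adj_counit {L L' : coframe} (f : L -> L') (x : L') (y : L) :
  cle x (f y) -> cle (ladj f x) y.
Proof. intros Hx. unfold ladj. apply cinf_lb. exact Hx. Qed.
Lemma ladj_f {L L' : coframe} (f : L -> L') (y : L) : cle (ladj f (f y)) y.
Proof. apply adj_counit. apply le_refl. Qed.
Lemma ladj_comp_le {L1 L2 L3 : coframe} (f : L1 -> L2) (g : L2 -> L3) (z : L3) :
  cle (ladj f (ladj g z)) (ladj (fun x => g (f x)) z).
Proof.
  change (ladj (fun x => g (f x)) z) with (cinf (fun l => cle z (g (f l)))).
  apply cinf_glb. intros l Hl. apply adj_counit. apply adj_counit. exact Hl.
Qed.
Lemma ladj_comp_ge {L1 L2 L3 : coframe} (f : L1 -> L2) (g : L2 -> L3)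
  (Hg : coframe_morphism g) (s : L2) :
  cle (ladj (fun x => g (f x)) (g s)) (ladj f s).
Proof.
  change (ladj f s) with (cinf (fun l => cle s (f l))).
  apply cinf_glb. intros l Hl. apply adj_counit. apply (mor_mono g Hg). exact Hl.
Qed.
End Mor.

Definition gfun {I : Type} (Li : I -> coframe)
  (nui : forall i, Li i -> Li i) (L : coframe) (phi : forall i, Li i -> L) (a : L) : L :=
  cinf (fun y => exists i, y = phi i (nui i (ladj (phi i) a))).

Section Nuf.
Lemma nuf_unfold {I : Type} (Li : I -> coframe)
  (nui : forall i, Li i -> Li i) (L : coframe) (phi : forall i, Li i -> L) (l : L) :
  final_adherence Li nui L phi l = cinf (fun y => exists s : list L,
          Forall complemented s /\ cle l (cjoinl s) /\ y = cjoinl (map (gfun Li nui L phi) s)).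
Proof. reflexivity. Qed.
End Nuf.

Theorem mainTheorem12 (C : coframe_category) (I : Type) (Li : I -> coframe)
  (nui : forall i, Li i -> Li i) (L : coframe) (phi : forall i, Li i -> L) :
  cobj C L ->
  (forall i, cobj C (Li i)) ->
  (forall i, adherence (nui i)) ->
  (forall i, chom C (Li i) L (phi i)) ->
  final_lift C Li nui L phi (final_adherence Li nui L phi) /\
  (forall nu : L -> L, final_lift C Li nui L phi nu ->
     nu = final_adherence Li nui L phi).
Proof.
  intros HL HLi Hadh Hphi.
  assert (Hmor : forall i, coframe_morphism (phi i)).
  { intro i. apply (chom_morph C); auto. }
  set (F := final_adherence Li nui L phi).
  set (g := gfun Li nui L phi).
  assert (nuf_lb : forall l s, Forall complemented s -> cle l (cjoinl s) ->
            cle (F l) (cjoinl (map g s))).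
  { intros l s H1 H2. unfold F. rewrite nuf_unfold. apply cinf_lb. exists s; auto. }
  assert (nuf_glb : forall l y, (forall s, Forall complemented s -> cle l (cjoinl s) ->
            cle y (cjoinl (map g s))) -> cle y (F l)).
  { intros l y H. unfold F. rewrite nuf_unfold. apply cinf_glb.
    intros x [s [H1 [H2 ->]]]. auto. }
  assert (nuf_mono : forall x y, cle x y -> cle (F x) (F y)).
  { intros x y Hxy. apply nuf_glb. intros s H1 H2. apply nuf_lb; auto.
    eapply le_trans; eauto. }
  assert (nuf_bot : F cbot = cbot).
  { apply cle_antisym; [| apply bot_le].
    apply (nuf_lb cbot []); [constructor | apply le_refl]. }
  assert (nuf_join : forall x y, F (cjoin x y) = cjoin (F x) (F y)).
  { intros x y. apply cle_antisym.
    - unfold F at 2 3. rewrite (nuf_unfold _ _ _ _ x), (nuf_unfold _ _ _ _ y).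
      apply join_inf2_ge. intros u v [s [Hs [Hcs ->]]] [t [Ht [Hct ->]]].
      eapply le_trans; [apply (nuf_lb _ (s ++ t)) |].
      + apply Forall_app; auto.
      + eapply le_trans; [apply join_mono; eauto | apply cjoinl_app_ge].
      + rewrite map_app. apply cjoinl_app_le.
    - apply join_lub; apply nuf_mono; [apply join_l | apply join_r]. }
  assert (nuf_cjoinl : forall s, F (cjoinl s) = cjoinl (map F s)).
  { induction s as [|a s IH]; simpl; [exact nuf_bot | rewrite nuf_join, IH; reflexivity]. }
  assert (nuf_adh : adherence F).
  { split; [exact nuf_mono | split; [intros s _; apply nuf_cjoinl |]].
    intros l. apply cle_antisym.
    - apply cinf_glb. intros y [a [Ha [Hla ->]]]. apply nuf_mono; exact Hla.
    - apply nuf_glb. intros s Hs Hls. eapply le_trans.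
      + apply cinf_lb. exists (cjoinl s). split; [apply compl_cjoinl; exact Hs |].
        split; [exact Hls | reflexivity].
      + apply nuf_lb; [exact Hs | apply le_refl]. }
  assert (nuf_le_g : forall l a, complemented a -> cle l a -> cle (F l) (g a)).
  { intros l a Ha Hla. eapply le_trans; [apply (nuf_lb l [a]) |].
    - constructor; [exact Ha | constructor].
    - simpl. eapply le_trans; [exact Hla | apply join_l].
    - simpl. apply join_lub; [apply le_refl | apply bot_le]. }
  assert (g_lb : forall a i, cle (g a) (phi i (nui i (ladj (phi i) a)))).
  { intros a i. unfold g, gfun. apply cinf_lb. exists i; reflexivity. }
  assert (cont_phi : forall i l', cle (F l') (phi i (nui i (ladj (phi i) l')))).
  { intros i l'. destruct (Hadh i) as [m [_ e]]. rewrite (e (ladj (phi i) l')).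
    apply (mor_glb _ (Hmor i)). intros y [c [Hc [Hle ->]]].
    eapply le_trans; [apply (nuf_le_g l' (phi i c)) |].
    - apply (mor_compl _ (Hmor i)); exact Hc.
    - eapply le_trans; [apply (adj_unit _ (Hmor i)) | apply (mor_mono _ (Hmor i)); exact Hle].
    - eapply le_trans; [apply g_lb |]. apply (mor_mono _ (Hmor i)). apply m. apply ladj_f. }
  assert (Hfl : final_lift C Li nui L phi F).
  { split; [exact nuf_adh | split; [intros i l'; apply cont_phi |]].
    intros L' nu' psi HL' Hnu' Hpsi.
    assert (Hpm : coframe_morphism psi) by (apply (chom_morph C); auto).
    destruct Hnu' as [m' [j' e']].
    split.
    - intros Hc i z. cbn beta. eapply le_trans; [apply Hc |].
      apply (mor_mono _ Hpm). eapply le_trans; [apply cont_phi |].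
      apply (mor_mono _ (Hmor i)). apply (proj1 (Hadh i)). apply ladj_comp_le.
    - intros Hc z. unfold F. rewrite nuf_unfold. apply (mor_glb _ Hpm).
      intros y [s [Hs [Hcov ->]]]. rewrite (mor_cjoinl _ Hpm).
      eapply le_trans; [apply (m' z (cjoinl (map psi s))) |].
      + eapply le_trans; [apply (adj_unit _ Hpm) |].
        rewrite <- (mor_cjoinl _ Hpm). apply (mor_mono _ Hpm). exact Hcov.
      + rewrite j'.
        * rewrite !map_map. apply cjoinl_map_mono. intros a Ha.
          unfold gfun. apply (mor_glb _ Hpm). intros y [i ->].
          eapply le_trans; [apply (Hc i (psi a)) |]. cbn beta.
          apply (mor_mono _ Hpm). apply (mor_mono _ (Hmor i)). apply (proj1 (Hadh i)).
          apply ladj_comp_ge. exact Hpm.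
        * apply Forall_map. eapply Forall_impl; [| exact Hs].
          intros a Ha. apply (mor_compl _ Hpm); exact Ha. }
  split; [exact Hfl |].
  intros nu [Hnu [Hcont Hfin]]. extensionality l. apply cle_antisym.
  - pose proof (proj2 (proj2 (proj2 Hfl) L nu (fun x => x) HL Hnu (chom_id C L HL)) Hcont) as Hc.
    eapply le_trans; [apply Hc |]. apply nuf_mono. exact (ladj_f (fun x : L => x) l).
  - pose proof (proj2 (Hfin L F (fun x => x) HL nuf_adh (chom_id C L HL)) (proj1 (proj2 Hfl))) as Hc.
    eapply le_trans; [apply Hc |]. apply (proj1 Hnu). exact (ladj_f (fun x : L => x) l).
Qed.
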